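(* Let $d$ be a positive odd integer, $n=\frac{d^2+1}{2}$, and $P_m(x)=1+x+\cdots+x^{m-1}\in\mathbb{F}_2[x]$. Then: (1) $xP_d(x^d)$ is an inverse of $P_d(x)$ both modulo $x^n-1$ and modulo $P_n(x)$, i.e. $P_d(x)\cdot xP_d(x^d)\equiv 1$ modulo each of these; and this inverse $xP_d(x^d)$ has weight $d$. (2) In $\mathbb{F}_2[x]$, $$P_n(x)=P_d(x)\big(1+x^d+x^{2d}+\cdots+x^{d(\frac{d-1}{2}-1)}\big)+\big(x^{d\frac{d-1}{2}}+x^{d\frac{d-1}{2}+1}+\cdots+x^{n-1}\big).$$
   Context: Weight means number of nonzero coefficients. *)

(* Defs.v *)
From HB Require Import structures.
From mathcomp Require Import all_boot all_order all_algebra.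
Set Implicit Arguments. Unset Strict Implicit. Unset Printing Implicit Defensive.
Import GRing.Theory.
Local Open Scope ring_scope.

Definition Pm (m : nat) : {poly 'F_2} := \sum_(i < m) 'X^i.

Definition weight (p : {poly 'F_2}) : nat := count (fun c => c != 0) (polyseq p).

(* Main.v *)
From mathcomp Require Import zify.
Require Import Defs.
From HB Require Import structures.
From mathcomp Require Import all_boot all_order all_algebra.
Import GRing.Theory.
Local Open Scope ring_scope.

Lemma weightE (p : {poly 'F_2}) N : (size p <= N)%N ->
  weight p = (\sum_(j < N) ((p`_j != 0)%R : nat))%N.
Proof.
move=> hN; rewrite /weight -sum1_count (big_nth 0) big_mkord.
rewrite (big_ord_widen_cond N (fun i => p`_i != 0) (fun _ => 1%N)) // big_mkcond /=.
apply: eq_bigr => i _.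
case: ltnP => hi; first by rewrite andbT; case: (_ != 0).
by rewrite andbF nth_default.
Qed.

Lemma weight_sum (m N : nat) (e : nat -> nat) : injective e ->
  (forall i, (i < m)%N -> (e i < N)%N) ->
  (size (\sum_(i < m) 'X^(e i) : {poly 'F_2})%R <= N)%N ->
  weight (\sum_(i < m) 'X^(e i)) = m.
Proof.
move=> inje he hs; rewrite (weightE _ _ hs).
have H : forall j : 'I_N, (((\sum_(i < m) 'X^(e i) : {poly 'F_2})`_j != 0)%R : nat)
   = (\sum_(i < m) (e i == j))%N.
  move=> j; rewrite coef_sum.
  have [/existsP [i0 hi0]|hno] := boolP [exists i : 'I_m, e i == j].
    rewrite (bigD1 i0) //= [in RHS](bigD1 i0) //= (eqP hi0) eqxx.
    rewrite coefXn eqxx.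
    have hne : forall i : 'I_m, i != i0 -> e i != j.
      move=> i hi; apply/eqP => hij; move: hi; suff -> : i = i0 by rewrite eqxx.
      by apply/val_inj/inje; rewrite hij (eqP hi0).
    rewrite big1 => [|i /hne hi]; last by rewrite coefXn eq_sym (negbTE hi).
    by rewrite big1 => [|i /hne /negbTE ->].
  have hne : forall i : 'I_m, e i != j.
    by move=> i; apply/negP=> h; apply: (negP hno); apply/existsP; exists i.
  rewrite big1 => [|i _]; last by rewrite coefXn eq_sym (negbTE (hne i)).
  by rewrite big1 => [|i _]; [|rewrite (negbTE (hne i))].
rewrite (eq_bigr _ (fun j _ => H j)) exchange_big /=.
rewrite -[RHS]card_ord -sum1_card; apply: eq_bigr => i _.
rewrite (eq_bigr (fun j : 'I_N => if j == e i :> nat then 1 else 0)%N); last by move=> j _; rewrite eq_sym; case: eqP.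
by rewrite -big_mkcond /= (big_ord1_eq _ (fun _ => 1%N)) he.
Qed.

Lemma oppF2 (p : {poly 'F_2}) : - p = p.
Proof. apply/polyP => i; rewrite coefN; apply/val_inj; by move: (p`_i) => -[[|[|]] //]. Qed.

Lemma addF2 (p : {poly 'F_2}) : p + p = 0.
Proof. by rewrite -{1}(oppF2 p) addNr. Qed.

Lemma PmD m a : Pm (m + a) = Pm m + 'X^m * Pm a.
Proof.
rewrite /Pm big_split_ord /= mulr_sumr; congr (_ + _); apply: eq_bigr => i _.
by rewrite exprD.
Qed.

Lemma Pm0 : Pm 0 = 0. Proof. by rewrite /Pm big_ord0. Qed.
Lemma Pm1 : Pm 1 = 1. Proof. by rewrite /Pm big_ord1 expr0. Qed.

Lemma PmM a k : Pm a * \sum_(i < k) 'X^(a * i) = Pm (a * k).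
Proof.
elim: k => [|k IH]; first by rewrite big_ord0 mulr0 muln0 Pm0.
by rewrite big_ord_recr /= mulrDr IH mulnSr PmD mulrC.
Qed.

Lemma PmComp d : Pm d \Po 'X^d = \sum_(i < d) 'X^(d * i).
Proof.
have G : forall m (q : {poly 'F_2}), Pm m \Po q = \sum_(i < m) q ^+ i.
  move=> m q; rewrite /Pm; elim: m => [|m IH]; first by rewrite !big_ord0 comp_poly0.
  by rewrite !big_ord_recr /= comp_polyD IH comp_Xn_poly.
by rewrite G; apply: eq_bigr => i _; rewrite exprM.
Qed.

Theorem lemma2 (d : nat) (hd0 : (0 < d)%N) (hdodd : odd d) :
  let n := ((d ^ 2 + 1) %/ 2)%N in
  let inv := 'X * (Pm d \Po 'X^d) in
  [/\ (Pm d * inv) %% ('X^n - 1) = 1 %% ('X^n - 1),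
      (Pm d * inv) %% Pm n = 1 %% Pm n,
      weight inv = d &
      Pm n = Pm d * (\sum_(i < (d - 1) %/ 2) 'X^(d * i))
             + \sum_((d * ((d - 1) %/ 2))%N <= i < n) 'X^i].
Proof.
move=> n inv.
have [k dk] : exists k, d = (2 * k + 1)%N.
  by exists d./2; rewrite -[LHS]odd_double_half hdodd -muln2 mulnC addnC.
have hn : n = (2*k*k+2*k+1)%N.
  rewrite /n dk.
  have -> : ((2*k+1)^2+1 = 2 * (2*k*k+2*k+1))%N by rewrite expnS expn1; lia.
  by rewrite mulKn.
have hk : ((d - 1) %/ 2 = k)%N by rewrite dk addnK mulKn.
have key : Pm d * inv = 1 + Pm n * ('X^n - 1).
  have e1 : Pm d * inv = 'X * Pm (d * d) by rewrite /inv mulrCA PmComp PmM.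
  have e2 : (1 + d * d = n + n)%N by rewrite hn dk; lia.
  have := PmD n n; rewrite -e2 PmD Pm1 -e1 => h.
  by rewrite mulrBr mulr1 oppF2 (mulrC (Pm n)) (addrC _ (Pm n)) -h addrA addF2 add0r.
split.
- by rewrite key modpD modp_mull addr0.
- by rewrite key modpD mulrC modp_mull addr0.
- have -> : inv = \sum_(i < d) 'X^(d * i + 1).
    by rewrite /inv PmComp mulr_sumr; apply: eq_bigr => i _; rewrite addn1 exprS.
  have hlt : forall i, (i < d)%N -> (d * i + 1 < d * d + 1)%N.
    by move=> i hi; rewrite ltn_add2r ltn_pmul2l.
  apply: (weight_sum d (d * d + 1)%N (fun i => d * i + 1)%N) => //.
  + by move=> i j /eqP; rewrite eqn_add2r eqn_mul2l gtn_eqF //= => /eqP.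
  + apply: leq_trans (size_sum _ _ _) _.
    apply/bigmax_leqP => i _; rewrite size_polyXn; exact: hlt.
- have hle : (d * k <= n)%N by rewrite hn dk; lia.
  rewrite hk PmM /Pm -(big_mkord xpredT (fun i => 'X^i)).
  by rewrite (big_cat_nat (leq0n _) hle) big_mkord.
Qed.
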